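(* Let $K$ be a field, $s\ge2$, $S=K[t_1,\ldots,t_s]$ with each $t_i$ of degree $1$, and let $\mathcal{L}\subset\mathbb{Z}^s$ be a homogeneous lattice of rank $s-1$ generated as a $\mathbb{Z}$-module by the rows of an integral matrix $A$. Then $\deg S/I(\mathcal{L})=d_1\cdots d_{s-1}$, where $d_1,\ldots,d_{s-1}$ are the invariant factors of $A$.
   Context: A lattice is a subgroup of $\mathbb{Z}^s$; it is homogeneous if $\sum_ia_i=0$ for all $a\in\mathcal{L}$. For $a\in\mathbb{Z}^s$ write $a=a^+-a^-$ with $a^+,a^-\in\mathbb{N}^s$ of disjoint supports; $I(\mathcal{L})=(\{t^{a^+}-t^{a^-}:a\in\mathcal{L}\})$. The invariant factors of $A$ are the positive diagonal entries $d_1\mid d_2\mid\cdots$ of its Smith normal form. For a graded ideal $I$, with Hilbert function $H_I(d)=\dim_K S_d/I_d$ and Hilbert polynomial $h_I(t)=c_kt^k+\cdots$ (agreeing with $H_I(d)$ for $d\gg0$; $k=-1$ meaning $h_I=0$), $\deg S/I=c_k\,k!$ if $k\ge0$ and $\dim_K S/I$ if $k=-1$. *)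

(* Defs.v *)
From HB Require Import structures.
From mathcomp Require Import all_boot all_order all_algebra.
From mathcomp.multinomials Require Import mpoly.
Set Implicit Arguments. Unset Strict Implicit. Unset Printing Implicit Defensive.
Import Order.TTheory GRing.Theory Num.Theory.
Local Open Scope ring_scope.

Definition in_lattice (m s : nat) (A : 'M[int]_(m, s)) (a : 'rV[int]_s) : Prop :=
  exists u : 'rV[int]_m, a = u *m A.

(* a^+ and a^- as exponent vectors (disjoint supports, a = a^+ - a^-). *)
Definition posm (s : nat) (a : 'rV[int]_s) : 'X_{1..s} :=
  [multinom absz (Num.max (a ord0 i) 0) | i < s].
Definition negm (s : nat) (a : 'rV[int]_s) : 'X_{1..s} := posm (- a).

Definition lbinom (K : fieldType) (s : nat) (a : 'rV[int]_s) : {mpoly K[s]} :=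
  'X_[posm a] - 'X_[negm a].

Definition in_lattice_ideal (K : fieldType) (m s : nat) (A : 'M[int]_(m, s))
    (p : {mpoly K[s]}) : Prop :=
  exists r : seq ({mpoly K[s]} * 'rV[int]_s),
    (forall x, x \in r -> in_lattice A x.2) /\
    p = \sum_(x <- r) x.1 * lbinom K x.2.

Arguments in_lattice_ideal K {m s} A p.

Definition homog_deg (K : fieldType) (s d : nat) (p : {mpoly K[s]}) : bool :=
  all [pred mm | mdeg mm == d] (msupp p).

Definition indep_mod (K : fieldType) (s : nat) (I : {mpoly K[s]} -> Prop)
    (d n : nat) (ps : n.-tuple {mpoly K[s]}) : Prop :=
  (forall i, homog_deg d (tnth ps i)) /\
  forall c : 'I_n -> K, I (\sum_(i < n) c i *: tnth ps i) -> forall i, c i = 0.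

(* H_I(d) = dim_K S_d / I_d = n *)
Definition hilb_fun_is (K : fieldType) (s : nat) (I : {mpoly K[s]} -> Prop)
    (d n : nat) : Prop :=
  (exists ps : n.-tuple {mpoly K[s]}, indep_mod I d ps) /\
  ~ (exists ps : n.+1.-tuple {mpoly K[s]}, indep_mod I d ps).

(* deg S/I = e : with h_I the Hilbert polynomial (H_I(d) = h_I(d) for d >= N),
   e = c_k k! if h_I <> 0 has degree k and leading coefficient c_k,
   and e = dim_K S/I = sum_d H_I(d) = sum_{d<N} H_I(d) if h_I = 0. *)
Definition is_degree (K : fieldType) (s : nat) (I : {mpoly K[s]} -> Prop)
    (e : rat) : Prop :=
  exists H : nat -> nat, (forall d, hilb_fun_is I d (H d)) /\
  exists (h : {poly rat}) (N : nat),
    (forall d, (N <= d)%N -> (H d)%:R = h.[d%:R]) /\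
    (if h != 0 then e = lead_coef h * ((size h).-1)`!%:R
     else e = (\sum_(d < N) H d)%:R).

Definition invariant_factors (m s : nat) (A : 'M[int]_(m, s)) (ds : seq int) : Prop :=
  (size ds <= minn m s)%N /\ all (fun x => 0 < x) ds /\ sorted dvdz ds /\
  exists2 L : 'M[int]_m, L \in unitmx &
  exists2 R : 'M[int]_s, R \in unitmx &
    A = L *m (\matrix_(i, j) (ds`_i *+ (i == j :> nat))) *m R.

(* Main.v *)
Require Import Defs.
From HB Require Import structures.
From mathcomp Require Import all_boot all_order all_algebra.
From mathcomp.multinomials Require Import mpoly.
From mathcomp Require Import zify ring.
Set Implicit Arguments. Unset Strict Implicit. Unset Printing Implicit Defensive.
Import Order.TTheory GRing.Theory Num.Theory.
Local Open Scope ring_scope.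

Definition vec s (u : 'X_{1..s}) : 'rV[int]_s := \row_i (u i)%:Z.

Lemma absz_maxB (x y : nat) : absz (Num.max (x%:Z - y%:Z) 0) = (x - y)%N.
Proof.
case: (leqP y x) => h.
  by rewrite subzn // max_l.
rewrite max_r //; last by rewrite subr_le0 lez_nat ltnW.
by apply/esym/eqP; rewrite subn_eq0 ltnW.
Qed.

Section Ideal.
Variables (K : fieldType) (s m : nat) (A : 'M[int]_(m, s)).
Local Notation I := (in_lattice_ideal K A).

Lemma I0 : I 0.
Proof. by exists [::]; split => //; rewrite big_nil. Qed.

Lemma ID p q : I p -> I q -> I (p + q).
Proof.
move=> [r [hr ->]] [r' [hr' ->]]; exists (r ++ r'); split; last by rewrite big_cat.
by move=> x; rewrite mem_cat => /orP[/hr|/hr'].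
Qed.

Lemma IM q p : I p -> I (q * p).
Proof.
move=> [r [hr ->]]; exists [seq (q * x.1, x.2) | x <- r]; split.
  by move=> x /mapP[y /hr hy ->].
rewrite big_map mulr_sumr; apply: eq_bigr => x _; by rewrite mulrA.
Qed.

Lemma IZ c p : I p -> I (c *: p).
Proof. by move=> h; rewrite -mul_mpolyC; apply: IM. Qed.

Lemma IN p : I p -> I (- p).
Proof. by move=> h; rewrite -scaleN1r; apply: IZ. Qed.

Lemma IB p q : I p -> I q -> I (p - q).
Proof. by move=> hp hq; apply: ID => //; apply: IN. Qed.

Lemma Isum (J : Type) (r : seq J) (P : pred J) (F : J -> {mpoly K[s]}) :
  (forall j, P j -> I (F j)) -> I (\sum_(j <- r | P j) F j).
Proof. by move=> h; apply: (big_ind I) => //; [exact: I0 | exact: ID]. Qed.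

Lemma I_binom (u v : 'X_{1..s}) : in_lattice A (vec u - vec v) ->
  I ('X_[u] - 'X_[v]).
Proof.
move=> hL; set a := vec u - vec v.
set c := [multinom minn (u i) (v i) | i < s].
have hu : u = (c + posm a)%MM.
  apply/mnmP => i; rewrite mnmDE !mnmE !mxE absz_maxB; lia.
have hv : v = (c + negm a)%MM.
  apply/mnmP => i; rewrite mnmDE !mnmE !mxE opprB absz_maxB; lia.
exists [:: ('X_[c], a)]; split; first by move=> x; rewrite inE => /eqP->.
by rewrite big_seq1 /lbinom mulrBr -!mpolyXD -hu -hv.
Qed.

End Ideal.

Lemma absz_max0 (y : int) : (absz (Num.max y 0))%:Z = if 0 <= y then y else 0.
Proof.
rewrite /Order.max; case: ifP => h.
  have h' : y < 0 := h. by rewrite leNgt h'.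
have h' : ~~ (y < 0) by rewrite h.
by rewrite leNgt h' /= gez0_abs // leNgt.
Qed.

Lemma absz_maxN (x : int) :
  (absz (Num.max x 0))%:Z - (absz (Num.max (- x) 0))%:Z = x.
Proof.
rewrite !absz_max0 oppr_ge0; case: (lerP 0 x) => h.
  case: (lerP x 0) => h2; last by rewrite subr0.
  have -> : x = 0 by apply/eqP; rewrite eq_le h h2.
  by rewrite oppr0 subr0.
by rewrite ltW // sub0r opprK.
Qed.


Lemma sum_superset (R : nmodType) (T : eqType) (s1 s2 : seq T) (F : T -> R) :
  uniq s1 -> uniq s2 -> {subset s1 <= s2} ->
  (forall x, x \in s2 -> x \notin s1 -> F x = 0) ->
  \sum_(x <- s2) F x = \sum_(x <- s1) F x.
Proof.
move=> u1 u2 sub h.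
rewrite (bigID (fun x => x \in s1)) /= [X in _ + X]big1_seq ?addr0; last first.
  by move=> x /andP[/negbTE hn hx]; apply: h => //; rewrite hn.
rewrite -big_filter; apply: perm_big; apply: uniq_perm; rewrite ?filter_uniq //.
by move=> x; rewrite mem_filter; apply/andP/idP => [[]//|hx]; split => //; apply: sub.
Qed.

Definition Md s d : seq 'X_{1..s} :=
  [seq val x | x <- enum [pred x : 'X_{1..s < d.+1} | mdeg (val x) == d]].

Lemma Md_uniq s d : uniq (Md s d).
Proof. by rewrite map_inj_uniq ?enum_uniq //; apply: val_inj. Qed.

Lemma mem_Md s d u : (u \in Md s d) = (mdeg u == d).
Proof.
apply/mapP/eqP => [[x]|hu]; first by rewrite mem_enum inE => /eqP hx ->.
have hb : (mdeg u < d.+1)%N by rewrite hu.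
by exists (BMultinom hb) => //; rewrite mem_enum inE /= hu.
Qed.

Section HF.
Variables (K : fieldType) (s m : nat) (A : 'M[int]_(m, s)) (d : nat).
Variables (G : finType) (g : 'X_{1..s} -> G).
Hypothesis inv : forall u v, in_lattice A (vec u - vec v) -> g u = g v.
Hypothesis homA : forall a, in_lattice A a -> \sum_(i < s) a ord0 i = 0.
Hypothesis comp : forall u v, mdeg u = d -> mdeg v = d -> g u = g v ->
  in_lattice A (vec u - vec v).
Local Notation I := (in_lattice_ideal K A).

Definition Tset := [set t | has (fun u => g u == t) (Md s d)].
Definition rep t := nth 0%MM (Md s d) (find (fun u => g u == t) (Md s d)).

Lemma repP t : t \in Tset -> rep t \in Md s d /\ g (rep t) = t.
Proof.
rewrite inE => h; split; first by rewrite /rep mem_nth // -has_find.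
by apply/eqP; apply: (nth_find 0%MM h).
Qed.

Lemma gT u : mdeg u = d -> g u \in Tset.
Proof. by move=> hu; rewrite inE; apply/hasP; exists u => //; rewrite mem_Md hu. Qed.

Definition phi t (p : {mpoly K[s]}) := \sum_(u <- Md s d | g u == t) p@_u.

Lemma phi0 t : phi t 0 = 0.
Proof. by apply: big1 => u _; rewrite mcoeff0. Qed.

Lemma phiD t p q : phi t (p + q) = phi t p + phi t q.
Proof. by rewrite /phi -big_split; apply: eq_bigr => u _; rewrite mcoeffD. Qed.

Lemma phiZ t c p : phi t (c *: p) = c * phi t p.
Proof. by rewrite /phi mulr_sumr; apply: eq_bigr => u _; rewrite mcoeffZ. Qed.

Lemma phi_sum t (J : Type) (r : seq J) (P : pred J) (F : J -> {mpoly K[s]}) :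
  phi t (\sum_(j <- r | P j) F j) = \sum_(j <- r | P j) phi t (F j).
Proof. by apply: (big_morph (phi t)); [exact: phiD | exact: phi0]. Qed.

Lemma phiX t u : phi t 'X_[u] = ((mdeg u == d) && (g u == t))%:R.
Proof.
rewrite /phi; case h: ((mdeg u == d) && (g u == t)).
  case/andP: h => /eqP hu /eqP ht.
  have uM : u \in Md s d by rewrite mem_Md hu.
  rewrite (big_rem u) //= ht eqxx mcoeffX eqxx big1_seq ?addr0 //.
  move=> w /andP[_ hw]; rewrite mcoeffX; case: eqP => // ew.
  by move: hw; rewrite -ew mem_rem_uniqF ?Md_uniq.
apply: big1_seq => w /andP[/eqP hw wM]; rewrite mcoeffX; case: eqP => // ew.
by move: h; rewrite ew hw eqxx; move: wM; rewrite mem_Md => ->.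
Qed.

Lemma phi_binom t a q : in_lattice A a -> phi t (q * lbinom K a) = 0.
Proof.
move=> ha; rewrite [q]mpolyE mulr_suml phi_sum big1 // => w _.
rewrite -scalerAl phiZ /lbinom mulrBr -!mpolyXD phiD -scaleN1r phiZ !phiX.
have hl : in_lattice A (vec (w + posm a)%MM - vec (w + negm a)%MM).
  suff -> : vec (w + posm a)%MM - vec (w + negm a)%MM = a by [].
  apply/rowP => i; rewrite !mxE !mnmDE !mnmE !PoszD opprD addrACA subrr add0r.
  by rewrite !mxE absz_maxN.
rewrite !mdegD (inv hl).
have := homA hl; rewrite (eq_bigr (fun i => (posm a i)%:Z - (negm a i)%:Z)).
  rewrite sumrB -!(big_morph Posz PoszD (erefl 0%:Z)) -!mdegE => /eqP; rewrite subr_eq0 eqz_nat => /eqP ->.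
  by rewrite mulN1r subrr mulr0.
by move=> i _; rewrite !mxE !mnmDE !PoszD opprD addrACA subrr add0r.
Qed.

Lemma phiI t p : I p -> phi t p = 0.
Proof.
by case=> r [hr ->]; rewrite phi_sum big1_seq // => x /andP[_ /hr]; apply: phi_binom.
Qed.

Definition nT := #|Tset|.
Definition tv (j : 'I_nT) : G := enum_val j.
Definition rv (j : 'I_nT) := rep (tv j).

Lemma rvP j : mdeg (rv j) = d /\ g (rv j) = tv j.
Proof.
have [h1 h2] := repP (enum_valP j); split => //.
by apply/eqP; rewrite -mem_Md.
Qed.

Lemma homogX u : homog_deg d ('X_[u] : {mpoly K[s]}) = (mdeg u == d).
Proof. by rewrite /homog_deg msuppX /= andbT. Qed.

Lemma lower : exists ps : nT.-tuple {mpoly K[s]}, indep_mod I d ps.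
Proof.
exists [tuple 'X_[rv j] | j < nT]; split.
  by move=> i; rewrite tnth_mktuple homogX (rvP i).1.
move=> c hI i; have := phiI (tv i) hI; rewrite phi_sum.
rewrite (bigD1 i) //= big1 ?addr0 => [|j hj]; rewrite tnth_mktuple phiZ phiX.
  by rewrite (rvP i).1 (rvP i).2 !eqxx mulr1.
rewrite (rvP j).1 (rvP j).2 eqxx /=.
by case: eqP => [/enum_val_inj ej|_]; [move: hj; rewrite ej eqxx | rewrite mulr0].
Qed.

Lemma reduce p : homog_deg d p ->
  I (p - \sum_(j < nT) phi (tv j) p *: 'X_[rv j]).
Proof.
move=> hp.
have hsupp u : u \in msupp p -> mdeg u = d.
  by move=> hu; move/allP: hp => /(_ u hu) /eqP.
have -> : \sum_(j < nT) phi (tv j) p *: 'X_[rv j] =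
          \sum_(u <- msupp p) p@_u *: 'X_[rep (g u)].
  transitivity (\sum_(j < nT) \sum_(u <- Md s d)
      (if g u == tv j then p@_u *: 'X_[rep (g u)] else 0)).
    apply: eq_bigr => j _; rewrite /phi scaler_suml big_mkcond.
    by apply: eq_bigr => u _; case: eqP => // ->; rewrite /rv.
  rewrite exchange_big /=.
  transitivity (\sum_(u <- Md s d) p@_u *: 'X_[rep (g u)]).
    apply: eq_big_seq => u; rewrite mem_Md => /eqP hu.
    have hT := gT hu.
    rewrite (bigD1 (enum_rank_in hT (g u))) //= /tv enum_rankK_in // eqxx.
    rewrite big1 ?addr0 // => j hj; case: eqP => // e.
    have ej : enum_rank_in hT (g u) = j.
      by apply: enum_val_inj; rewrite enum_rankK_in.
    by move: hj; rewrite ej eqxx.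
  apply: sum_superset; rewrite ?Md_uniq ?msupp_uniq //.
    by move=> u hu; rewrite mem_Md (hsupp u hu).
  by move=> u _ hu; rewrite (memN_msupp_eq0 hu) scale0r.
rewrite {1}[p]mpolyE -sumrB big_seq; apply: Isum => u hu.
rewrite -scalerBr; apply: IZ; apply: I_binom.
have {}hu : mdeg u = d by apply: hsupp.
have [h1 h2] := repP (gT hu).
by apply: comp => //; first (by apply/eqP; rewrite -mem_Md); rewrite h2.
Qed.

Lemma upper : ~ exists ps : nT.+1.-tuple {mpoly K[s]}, indep_mod I d ps.
Proof.
case=> ps [hh hind].
pose M : 'M[K]_(nT.+1, nT) := \matrix_(k, j) phi (tv j) (tnth ps k).
have : kermx M != 0.
  rewrite kermx_eq0 /row_free; apply/negP => /eqP h.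
  by have := rank_leq_col M; rewrite h ltnn.
case/rowV0Pn => v /sub_kermxP hv vnz.
suff h0 : forall k, v ord0 k = 0.
  by move/negP: vnz; apply; apply/eqP/rowP => k; rewrite h0 mxE.
apply: hind.
have -> : \sum_(k < nT.+1) v ord0 k *: tnth ps k =
  \sum_(k < nT.+1) v ord0 k *: (tnth ps k - \sum_(j < nT) phi (tv j) (tnth ps k) *: 'X_[rv j])
  + \sum_(k < nT.+1) v ord0 k *: \sum_(j < nT) phi (tv j) (tnth ps k) *: 'X_[rv j].
  by rewrite -big_split; apply: eq_bigr => k _ /=; rewrite scalerBr subrK.
have -> : \sum_(k < nT.+1) v ord0 k *: \sum_(j < nT) phi (tv j) (tnth ps k) *: 'X_[rv j] = 0.
  rewrite (eq_bigr (fun k => \sum_(j < nT) (v ord0 k * phi (tv j) (tnth ps k)) *: 'X_[rv j])); last first.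
    by move=> k _; rewrite scaler_sumr; apply: eq_bigr => j _; rewrite scalerA.
  rewrite exchange_big big1 // => j _; rewrite -scaler_suml.
  have := congr1 (fun B : 'rV_nT => B ord0 j) hv; rewrite !mxE => e0.
  rewrite [X in X *: _](_ : _ = 0) ?scale0r //; rewrite -[RHS]e0.
  by apply: eq_bigr => k _; rewrite mxE.
rewrite addr0; apply: Isum => k _; apply: IZ; apply: reduce; exact: hh.
Qed.

Lemma hilbT : hilb_fun_is I d nT.
Proof. by split; [exact: lower | exact: upper]. Qed.

End HF.

Lemma map_unit_int n (R : 'M[int]_n) : R \in unitmx ->
  map_mx (intr : int -> rat) R \in unitmx.
Proof.
move=> hR.
have h : map_mx (intr : int -> rat) (invmx R) *m map_mx intr R = 1%:M.
  by rewrite -map_mxM mulVmx // map_mx1.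
by case: (mulmx1_unit h).
Qed.

Section Rank.
Variables (n m : nat).
Local Notation s := n.+2.
Variables (A : 'M[int]_(m, s)) (ds : seq int)
  (L : 'M[int]_m) (R : 'M[int]_s).
Hypothesis hsz : (size ds <= minn m s)%N.
Hypothesis hpos : all (fun x => 0 < x) ds.
Hypothesis hL : L \in unitmx.
Hypothesis hR : R \in unitmx.
Hypothesis hA : A = L *m (\matrix_(i, j) (ds`_i *+ (i == j :> nat))) *m R.

Lemma nth_pos i : (i < size ds)%N -> 0 < ds`_i.
Proof. by move=> hi; move/allP: hpos; apply; rewrite mem_nth. Qed.

Lemma rankA : \rank (map_mx (intr : int -> rat) A) = size ds.
Proof.
have hk1 : (size ds <= m)%N by move: hsz; rewrite leq_min => /andP[].
have hk2 : (size ds <= s)%N by move: hsz; rewrite leq_min => /andP[].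
rewrite hA !map_mxM -mulmxA.
rewrite (eqmxMfull _ (_ : row_full _)); last by rewrite row_full_unit map_unit_int.
rewrite mxrankMfree; last by rewrite row_free_unit map_unit_int.
pose dl : 'rV[rat]_s := \row_j (if (j < size ds)%N then (ds`_j)%:~R else 1).
have -> : map_mx (intr : int -> rat) (\matrix_(i, j) (ds`_i *+ (i == j :> nat)))
          = (pid_mx (size ds) : 'M_(m, s)) *m diag_mx dl.
  apply/matrixP => i j; rewrite mul_mx_diag !mxE.
  case: eqP => [eij|_]; last by rewrite mulr0n rmorph0 mul0r.
  rewrite mulr1n /= eij; case: ltnP => hj; first by rewrite mul1r.
  by rewrite nth_default // rmorph0 mul0r.
rewrite mxrankMfree ?rank_pid_mx //.
rewrite row_free_unit unitmxE det_diag unitfE; apply/prodf_neq0 => j _.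
rewrite mxE; case: ltnP => hj; last by rewrite oner_eq0.
by rewrite intr_eq0 gt_eqF // nth_pos.
Qed.

Definition Dm := \matrix_(i, j) (ds`_i *+ (i == j :> nat)) : 'M[int]_(m, s).

Lemma latticeP a : in_lattice A a <-> forall j : 'I_s, (ds`_j %| (a *m invmx R) ord0 j)%Z.
Proof.
split.
  case=> u ->; rewrite hA !mulmxA mulmxK // => j.
  rewrite !mxE; apply: rpred_sum => i _; rewrite !mxE.
  case: eqP => [e|_]; last by rewrite mulr0n mulr0 dvdz0.
  by rewrite mulr1n e; apply: dvdz_mull; apply: dvdzz.
move=> h; set w := a *m invmx R.
pose z : 'rV[int]_m := \row_i (if (i < s)%N then (w ord0 (inord i) %/ ds`_i)%Z else 0).
exists (z *m invmx L); rewrite hA !mulmxA mulmxKV //.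
suff e : w = z *m Dm by rewrite -e /w mulmxKV.
apply/rowP => j; rewrite [RHS]mxE.
case: (ltnP j m) => hjm.
  rewrite (bigD1 (Ordinal hjm)) //= big1 => [|i hi]; last first.
    rewrite /Dm [X in _ * X]mxE; case: eqP => [e|_]; last by rewrite mulr0n mulr0.
    by move: hi; rewrite (_ : i = Ordinal hjm) ?eqxx //; apply: val_inj.
  rewrite /Dm !mxE eqxx mulr1n addr0 /= ltn_ord.
  have -> : (inord j : 'I_s) = j by apply: val_inj; rewrite /= inordK.
  by move: (divzK (h j)); rewrite !mxE => ->.
rewrite big1 => [|i _]; last first.
  rewrite /Dm [X in _ * X]mxE; case: eqP => [e|_]; last by rewrite mulr0n mulr0.
  by have := ltn_ord i; rewrite e ltnNge hjm.
have hd : ds`_j = 0.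
  by rewrite nth_default //; apply: leq_trans _ hjm; apply: leq_trans hsz _; exact: geq_minl.
by have := divzK (h j); rewrite hd mulr0.
Qed.

Hypothesis homA : forall a, in_lattice A a -> \sum_(i < s) a ord0 i = 0.
Hypothesis hk : size ds = n.+1.

Definition F (a : 'rV[int]_s) := a *m invmx R.

Lemma rowsum0 (j : 'I_s) : (j < size ds)%N -> \sum_i R j i = 0.
Proof.
move=> hj.
have hl : in_lattice A (ds`_j *: row j R).
  apply/latticeP => j'; rewrite rowE -scalemxAl mulmxK // !mxE.
  case E: (_ && _); last by rewrite mulr0 dvdz0.
  by move/andP: E => [_ /eqP ->]; rewrite mulr1 dvdzz.
have := homA hl; rewrite (eq_bigr (fun i => ds`_j * R j i)) => [|i _]; last by rewrite !mxE.
by rewrite -mulr_sumr => /eqP; rewrite mulf_eq0 gt_eqF ?nth_pos //= => /eqP.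
Qed.

Definition sigma := \sum_i R ord_max i.

Lemma degF (a : 'rV[int]_s) : \sum_i a ord0 i = F a ord0 ord_max * sigma.
Proof.
rewrite -{1}[a](mulmxKV hR).
rewrite (eq_bigr (fun i => \sum_j F a ord0 j * R j i)) => [|i _]; last by rewrite mxE.
rewrite exchange_big big_ord_recr /= big1 ?add0r -?mulr_sumr // => j _.
by rewrite -mulr_sumr rowsum0 ?mulr0 // hk /=.
Qed.

Lemma sigma_unit : F (delta_mx 0 ord0) ord0 ord_max * sigma = 1.
Proof.
rewrite -degF (bigD1 ord0) //= big1 ?addr0 => [|i hi]; rewrite mxE ?eqxx //.
by rewrite (negbTE hi) andbF.
Qed.

Lemma sigma_neq0 : sigma != 0.
Proof. by apply/eqP => h; have := sigma_unit; rewrite h mulr0 => /eqP; rewrite eq_sym oner_eq0. Qed.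

Definition P := \prod_(x <- ds) x.
Definition Pn := absz P.

Lemma P_gt0 : 0 < P.
Proof. by rewrite /P big_seq; apply: prodr_gt0 => x hx; move/allP: hpos => /(_ x hx). Qed.

Lemma Pn_gt0 : (0 < Pn)%N.
Proof. by rewrite /Pn absz_gt0 gt_eqF // P_gt0. Qed.

Lemma dvd_P (j : nat) : (j < size ds)%N -> (ds`_j %| P)%Z.
Proof.
move=> hj; rewrite /P (big_nth 0) big_mkord (bigD1 (Ordinal hj)) //=.
by apply: dvdz_mulr; apply: dvdzz.
Qed.

Definition bnd (j : nat) := if (j < size ds)%N then absz ds`_j else 1%N.

Lemma bnd_le j : (bnd j <= Pn)%N.
Proof.
rewrite /bnd; case: ifP => hj; last exact: Pn_gt0.
by apply: dvdn_leq; [exact: Pn_gt0 | have := dvd_P hj; rewrite dvdzE].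
Qed.

Definition gval (u : 'X_{1..s}) (j : nat) :=
  if (j < size ds)%N then absz ((F (vec u)) ord0 (inord j) %% ds`_j)%Z else 0%N.

Lemma abs_lt (x d : int) : 0 <= x -> x < d -> (absz x < absz d)%N.
Proof.
move=> h0 h1; rewrite -ltz_nat !gez0_abs //; first by apply: le_trans (ltW h1).
Qed.

Lemma gval_lt u j : (gval u j < bnd j)%N.
Proof.
rewrite /gval /bnd; case: ifP => hj //.
have hd := nth_pos hj.
by apply: abs_lt; [apply: modz_ge0; rewrite gt_eqF | apply: ltz_pmod].
Qed.

Definition G := {ffun 'I_s -> 'I_Pn.+1}.
Definition g (u : 'X_{1..s}) : G := [ffun j : 'I_s => inord (gval u j)].

Lemma gval_le u j : (gval u j <= Pn)%N.
Proof. exact: leq_trans (ltnW (gval_lt u j)) (bnd_le j). Qed.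

Lemma g_eq u v : g u = g v <-> (forall j : 'I_s, gval u j = gval v j).
Proof.
split => [h j|h]; last by apply/ffunP => j; rewrite !ffunE h.
have := congr1 (fun f : G => val (f j)) h; rewrite !ffunE /= !inordK //;
  by rewrite ltnS gval_le.
Qed.

Lemma Fvec_sub u v j : F (vec u - vec v) ord0 j = F (vec u) ord0 j - F (vec v) ord0 j.
Proof. by rewrite /F mulmxBl !mxE. Qed.

Lemma g_inv u v : in_lattice A (vec u - vec v) -> g u = g v.
Proof.
move/latticeP => h; apply/g_eq => j; rewrite /gval; case: ifP => // hj.
have -> : (inord j : 'I_s) = j by apply: val_inj; rewrite /= inordK.
congr absz; apply/eqP; rewrite eqz_mod_dvd -Fvec_sub; exact: h.
Qed.

Lemma g_comp u v : mdeg u = mdeg v -> g u = g v -> in_lattice A (vec u - vec v).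
Proof.
move=> hd /g_eq h; apply/latticeP => j; rewrite -/(F _) Fvec_sub.
case: (ltnP j (size ds)) => hj.
  have := h j; rewrite /gval hj.
  have -> : (inord j : 'I_s) = j by apply: val_inj; rewrite /= inordK.
  have hpj := nth_pos hj.
  move=> /(congr1 Posz); rewrite !gez0_abs ?modz_ge0 ?gt_eqF // => /eqP.
  by rewrite eqz_mod_dvd.
rewrite nth_default //.
have hj' : j = ord_max.
  have hj2 : (n.+1 <= j)%N by move: hj; rewrite hk.
  by apply: val_inj => /=; apply/eqP; rewrite eqn_leq hj2 -ltnS ltn_ord.
have := degF (vec u - vec v); rewrite -Fvec_sub hj'.
rewrite (eq_bigr (fun i => (u i)%:Z - (v i)%:Z)) => [|i _]; last by rewrite !mxE.
rewrite sumrB -!(big_morph Posz PoszD (erefl 0%:Z)) -!mdegE hd subrr.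
move/esym/eqP; rewrite mulf_eq0 (negbTE sigma_neq0) orbF => /eqP ->.
exact: dvdz0.
Qed.

Definition Bset : {set G} := [set t : G | [forall j : 'I_s, (t j < bnd j)%N]].

Lemma card_lt N b : (b <= N)%N -> #|[pred x : 'I_N | (x < b)%N]| = b.
Proof.
move=> hb; rewrite -[RHS]card_ord -(card_image (f := widen_ord hb)); last first.
  by move=> x y /(congr1 val) /= /val_inj.
apply: eq_card => x; rewrite inE; apply/idP/imageP => [hx|[y _ ->]].
  by exists (Ordinal hx) => //; apply: val_inj.
by rewrite /= ltn_ord.
Qed.

Lemma card_Bset : #|Bset| = Pn.
Proof.
have -> : #|Bset| = #|(family (fun j : 'I_s => [pred x : 'I_Pn.+1 | (x < bnd j)%N]) : simpl_pred G)|.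
  by apply: eq_card => t; rewrite inE; apply/forallP/familyP => h j; have := h j.
rewrite card_family foldrE big_map big_enum /=.
rewrite (eq_bigr (fun j : 'I_s => bnd j)) => [|j _]; last by rewrite card_lt // leqW // bnd_le.
rewrite big_ord_recr /= {2}/bnd hk ltnn muln1.
rewrite /Pn /P [in RHS](big_nth 0) [in RHS]big_mkord [RHS](big_morph (fun x : int => absz x) abszM (erefl : absz 1 = 1%N)).
rewrite -(big_mkord xpredT (fun i => absz ds`_i)) -(big_mkord xpredT bnd) hk.
by apply: eq_big_nat => i /andP[_ hi]; rewrite /bnd hk hi.
Qed.

Lemma Tsub d0 : Tset d0 g \subset Bset.
Proof.
apply/subsetP => t; rewrite !inE => /hasP [u _ /eqP <-].
apply/forallP => j; rewrite ffunE inordK ?ltnS ?gval_le //; exact: gval_lt.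
Qed.

Lemma Tsup d0 : (s * Pn <= d0)%N -> Bset \subset Tset d0 g.
Proof.
move=> hd; apply/subsetP => t; rewrite !inE => /forallP ht.
suff [u hu <-] : exists2 u, mdeg u = d0 & g u = t.
  by apply/hasP; exists u; rewrite ?mem_Md ?hu.
pose c0 := F (delta_mx 0 ord0) ord0 ord_max.
pose w : 'rV[int]_s := \row_j (if (j < size ds)%N then ((t j : nat)%:Z) else d0%:Z * c0).
pose y0 := w *m R.
have Fy0 : y0 *m invmx R = w by rewrite /y0 mulmxK.
have dy0 : \sum_i y0 ord0 i = d0%:Z.
  by rewrite degF /F Fy0 mxE hk ltnn -mulrA sigma_unit mulr1.
clearbody y0.
pose z : 'rV[int]_s := \row_i (if i == ord0 then \sum_(i' < s | i' != ord0) (y0 ord0 i' %/ P)%Z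
   else - (y0 ord0 i %/ P)%Z).
pose y := y0 + P *: z.
have yi i : i != ord0 -> y ord0 i = (y0 ord0 i %% P)%Z.
  move=> hi; rewrite /y /z !mxE (negbTE hi) {1}(divz_eq (y0 ord0 i) P).
  by rewrite mulrN mulrC addrAC subrr add0r.
have sz : \sum_i z ord0 i = 0.
  rewrite (bigD1 ord0) //= mxE eqxx.
  rewrite [X in _ + X](eq_bigr (fun i => - (y0 ord0 i %/ P)%Z)) ?sumrN ?subrr // => i hi.
  by rewrite mxE (negbTE hi).
have dy : \sum_i y ord0 i = d0%:Z.
  rewrite (eq_bigr (fun i => y0 ord0 i + P * z ord0 i)) => [|i _]; last by rewrite !mxE.
  by rewrite big_split /= -mulr_sumr sz mulr0 addr0 dy0.
have hP : P = Pn%:Z by rewrite /Pn gez0_abs // ltW // P_gt0.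
have ypos i0 : 0 <= y ord0 i0.
  case: (eqVneq i0 ord0) => [->|hi0]; last by rewrite yi // modz_ge0 // gt_eqF // P_gt0.
  have -> : y ord0 ord0 = d0%:Z - \sum_(i < s | i != ord0) y ord0 i.
    by rewrite -dy (bigD1 ord0) //= addrK.
  rewrite subr_ge0.
  apply: le_trans (_ : \sum_(i < s | i != ord0) P <= _).
    by apply: ler_sum => i hi; rewrite yi //; apply/ltW/ltz_pmod/P_gt0.
  apply: le_trans (_ : \sum_(i < s) P <= _).
    by rewrite [X in _ <= X](bigD1 ord0) //= lerDr ltW // P_gt0.
  rewrite sumr_const card_ord hP; move: hd; clear; lia.

pose u := [multinom absz (y ord0 i) | i < s].
have vu : vec u = y by apply/rowP => i; rewrite [LHS]mxE mnmE gez0_abs.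
exists u.
  apply/eqP; rewrite -eqz_nat mdegE (big_morph Posz PoszD (erefl 0%:Z)).
  by rewrite (eq_bigr (fun i => y ord0 i)) ?dy // => i _; rewrite mnmE gez0_abs.
apply/ffunP => j; rewrite ffunE /gval vu.
case: ifP => hj; last first.
  apply: val_inj => /=; rewrite inordK //; move: (ht j); rewrite /bnd hj.
  by case: (t j) => [[]].
have -> : (inord j : 'I_s) = j by apply: val_inj; rewrite /= inordK.
have -> : F y ord0 j = w ord0 j + P * (z *m invmx R) ord0 j.
  by rewrite /F /y mulmxDl -scalemxAl Fy0 !mxE.
have -> : P * (z *m invmx R) ord0 j = ((P %/ ds`_j)%Z * (z *m invmx R) ord0 j) * ds`_j.
  by rewrite mulrAC divzK // dvd_P.
rewrite addrC modzMDl mxE hj modz_small.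
  by rewrite absz_nat inord_val.
have := ht j; rewrite /bnd hj => htj.
rewrite lez_nat leq0n /=; rewrite -(gez0_abs (ltW (nth_pos hj))) ltz_nat //.
Qed.

End Rank.

Lemma indep_prefix (K : fieldType) (s : nat) (I : {mpoly K[s]} -> Prop) d a b
  (ps : b.-tuple {mpoly K[s]}) : (a <= b)%N -> indep_mod I d ps ->
  exists qs : a.-tuple {mpoly K[s]}, indep_mod I d qs.
Proof.
move=> hab [hh hind].
exists [tuple tnth ps (widen_ord hab i) | i < a]; split.
  by move=> i; rewrite tnth_mktuple.
move=> c hI i.
pose c' (j : 'I_b) : K := if insub (val j) is Some i' then c i' else 0.
have := hind c'; set S := (\sum_(j < b) _) => h'.
have eS : S = \sum_(i < a) c i *: tnth [tuple tnth ps (widen_ord hab i) | i < a] i.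
  pose Fn (j : nat) := (if insub j is Some i' then c i' else 0) *: nth 0 ps j.
  have -> : S = \sum_(j < b) Fn j.
    by apply: eq_bigr => j _; rewrite /Fn (tnth_nth 0).
  rewrite [RHS](eq_bigr (fun i : 'I_a => Fn i)) => [|i' _]; last first.
    by rewrite /Fn tnth_mktuple (tnth_nth 0) /= valK.
  rewrite [RHS](big_ord_widen b Fn hab) [RHS]big_mkcond; apply: eq_bigr => j _.
  case: ltnP => // hj; rewrite /Fn insubN ?scale0r //; by rewrite -leqNgt.
have := h' (eq_ind_r I hI eS) (widen_ord hab i).
by rewrite /c' /= valK.
Qed.

Lemma hilb_unique (K : fieldType) (s : nat) (I : {mpoly K[s]} -> Prop) d a b :
  hilb_fun_is I d a -> hilb_fun_is I d b -> a = b.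
Proof.
move=> [[pa ha] na] [[pb hb] nb].
case: (ltngtP a b) => // hab.
  by case: na; apply: (indep_prefix hab hb).
by case: nb; apply: (indep_prefix hab ha).
Qed.

Lemma poly_eq_inf (p q : {poly rat}) N :
  (forall d, (N <= d)%N -> p.[d%:R] = q.[d%:R]) -> p = q.
Proof.
move=> h; apply/eqP; rewrite -subr_eq0; apply/negPn/negP => hr.
set r := p - q in hr.
pose rs := [seq ((N + i)%:R : rat) | i <- iota 0 (size r)].
have hall : all (root r) rs.
  apply/allP => x /mapP [i _ ->]; rewrite /root /r hornerD hornerN h ?leq_addr //.
  by rewrite subrr.
have hu : uniq rs.
  rewrite map_inj_uniq ?iota_uniq // => i j /eqP.
  by rewrite eqr_nat eqn_add2l => /eqP.
by have := max_poly_roots hr hall hu; rewrite size_map size_iota ltnn.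
Qed.

Unset Implicit Arguments.
Set Strict Implicit.

Theorem corollary3p14 (K : fieldType) (s m : nat) (A : 'M[int]_(m, s)) :
  (2 <= s)%N ->
  (forall a, in_lattice A a -> \sum_(i < s) a ord0 i = 0) ->
  \rank (map_mx (intr : int -> rat) A) = s.-1 ->
  forall ds : seq int, invariant_factors A ds ->
    is_degree (in_lattice_ideal K A) (\prod_(d <- ds) d)%:~R /\
    (forall e, is_degree (in_lattice_ideal K A) e -> e = (\prod_(d <- ds) d)%:~R).
Proof.
case: s A => [|[|n]] A // _ homA hrank ds [hsz [hpos [_ [L hL [R hR hA]]]]].
have hk : size ds = n.+1 by rewrite -(rankA hsz hpos hL hR hA) hrank.
pose H d := nT d (g ds R).
have hH d : hilb_fun_is (in_lattice_ideal K A) d (H d).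
  apply: hilbT => //.
    by move=> u v; apply: (g_inv hsz hpos hL hR hA).
  move=> u v hu hv; apply: (g_comp hsz hpos hL hR hA homA hk).
  by rewrite hu hv.
have hHN d : (n.+2 * Pn ds <= d)%N -> H d = Pn ds.
  move=> hd; rewrite /H /nT; apply: etrans (card_Bset hpos hk); apply: eq_card => t.
  apply/idP/idP => ht.
    by apply: (subsetP (Tsub R hpos d)).
  by apply: (subsetP (Tsup hsz hpos hL hR hA homA hk hd)).
have hP : (\prod_(d <- ds) d)%:~R = (Pn ds)%:R :> rat.
  have : P ds = (Pn ds)%:Z by rewrite /Pn gez0_abs // ltW // P_gt0.
  by rewrite /P => ->.
have Pn0 : (Pn ds)%:R != 0 :> rat by rewrite pnatr_eq0 -lt0n Pn_gt0.
have hc : (Pn ds)%:R%:P != 0 :> {poly rat} by rewrite polyC_eq0.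
split.
  exists H; split => //; exists ((Pn ds)%:R)%:P, (n.+2 * Pn ds)%N; split.
    by move=> d hd; rewrite hornerC hHN.
  by rewrite hc lead_coefC size_polyC Pn0 /= mulr1 hP.
move=> e [H' [hH' [h' [N' [hN' hif]]]]].
have eH d : H' d = H d by apply: hilb_unique (hH' d) (hH d).
have eh' : h' = ((Pn ds)%:R)%:P.
  apply: (@poly_eq_inf _ _ (maxn N' (n.+2 * Pn ds))) => d hd.
  rewrite -hN' ?eH ?hornerC ?hHN //; first by apply: leq_trans hd; apply: leq_maxr.
  by apply: leq_trans hd; apply: leq_maxl.
by move: hif; rewrite eh' hc lead_coefC size_polyC Pn0 /= mulr1 hP.
Qed.
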